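(* Let $f \in \mathbb{F}_q[x]$ be a squarefree polynomial of degree $n$. Let $\tilde{f}$ be the product of the irreducible factors of $f$ of degree higher than $n^{2 / 3}$. Then the order of the Frobenius automorphism $\sigma$ of $\mathbb{F}_q[x] / \tilde{f}$ (the $\mathbb{F}_q$-algebra automorphism determined by $x\mapsto x^q$) is less than $\exp\!\left(\frac{2}{3}\sqrt[3]{n} \ln n\right)$.
   Formalization: The degree n of f is assumed to satisfy n ≥ 4, so the bound on the order of σ covers only n ≥ 4. The statement above fails without it. *)

(* Defs.v *)
From HB Require Import structures.
From mathcomp Require Import all_boot all_order all_algebra.
From mathcomp Require Import boolp reals sequences exp.
Set Implicit Arguments. Unset Strict Implicit. Unset Printing Implicit Defensive.
Import Order.TTheory GRing.Theory Num.Theory.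
Local Open Scope ring_scope.

Definition squarefree_poly (F : fieldType) (f : {poly F}) : Prop :=
  f != 0 /\ forall g : {poly F}, g * g %| f -> (size g <= 1)%N.

(* Each divisor of f has size <= size f, hence is \poly_(i < size f) c`_i
   for a unique tuple c; so the product runs over each such factor exactly once. *)
Definition ftilde (R : realType) (F : finFieldType) (f : {poly F}) : {poly F} :=
  \prod_(c : (size f).-tuple F |
          [&& (\poly_(i < size f) c`_i) \is monic,
              `[< irreducible_poly (\poly_(i < size f) c`_i) >],
              (\poly_(i < size f) c`_i) %| f &
              (((size f).-1)%:R `^ (2/3) < ((size (\poly_(i < size f) c`_i)).-1)%:R :> R)])
     \poly_(i < size f) c`_i.

Definition frob (F : finFieldType) (h : {poly F}) (p : {poly F}) : {poly F} :=
  (p \Po 'X^#|F|) %% h.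

Definition frob_iter_id (F : finFieldType) (h : {poly F}) (k : nat) : Prop :=
  forall p : {poly F}, (iter k (frob h) p) %% h = p %% h.

Definition is_frob_order (F : finFieldType) (h : {poly F}) (k : nat) : Prop :=
  [/\ (0 < k)%N, frob_iter_id h k & forall j, (0 < j < k)%N -> ~ frob_iter_id h j].

(* Main.v *)
Require Import Defs.
From HB Require Import structures.
From mathcomp Require Import all_boot all_order all_algebra.
From mathcomp Require Import boolp reals sequences exp.
From mathcomp Require Import all_field.
From mathcomp Require Import lra.
Import Order.TTheory GRing.Theory Num.Theory.
Local Open Scope ring_scope.

Lemma card_pnat (F : finFieldType) : ([pchar {poly F}]).-nat #|F|.
Proof.
have [r pr rF] := finPcharP F.
have e : #|F| = (r ^ logn r #|F|)%N := card_pprimeChar rF.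
rewrite (eq_pnat _ (@pchar_poly F)) (eq_pnat _ (pcharf_eq rF)) e.
by rewrite pnatX pnat_id ?orbT.
Qed.

Lemma expq_add (F : finFieldType) (a b : {poly F}) :
  (a + b) ^+ #|F| = a ^+ #|F| + b ^+ #|F|.
Proof. exact: exprDn_pchar (card_pnat F). Qed.

Lemma comp_Xq (F : finFieldType) (p : {poly F}) :
  p \Po 'X^#|F| = p ^+ #|F|.
Proof.
have q0 : (0 < #|F|)%N by apply: (leq_trans _ (finNzRing_gt1 F)).
rewrite comp_polyE.
have -> : p ^+ #|F| = (\sum_(i < size p) p`_i *: 'X^i) ^+ #|F|.
  by rewrite -poly_def coefK.
have z : (0 : {poly F}) ^+ #|F| = 0 by rewrite expr0n; case: #|F| q0.
rewrite [in RHS](big_morph (fun x : {poly F} => x ^+ #|F|) (@expq_add F) z).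
apply: eq_bigr => i _.
by rewrite exprZn expf_card -!exprM mulnC.
Qed.

Lemma modpXm (F : fieldType) (h a : {poly F}) n :
  ((a %% h) ^+ n) %% h = (a ^+ n) %% h.
Proof.
elim: n => [|n IH]; first by rewrite !expr0.
rewrite !exprS -(modp_mul (a %% h)) IH modp_mul.
by rewrite mulrC -(modp_mul (a ^+ n)) modp_id modp_mul mulrC.
Qed.

Lemma dvdp_modeq (F : fieldType) (h a b : {poly F}) :
  h %| a - b -> a %% h = b %% h.
Proof.
move/modp_eq0; rewrite modpD modpN => /eqP; rewrite subr_eq0 => /eqP //.
Qed.

Lemma modeq_dvdp (F : fieldType) (h a b : {poly F}) :
  a %% h = b %% h -> h %| a - b.
Proof.
by move=> e; apply/modp_eq0P; rewrite modpD modpN e subrr.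
Qed.

Lemma frob_iterE (F : finFieldType) (h p : {poly F}) k :
  iter k (frob h) p %% h = p ^+ (#|F| ^ k) %% h.
Proof.
elim: k => [|k IH]; first by rewrite expn0 expr1.
rewrite iterS /frob modp_id comp_Xq -modpXm IH modpXm.
by rewrite expnSr exprM.
Qed.

Lemma frob_id_of_dvd (F : finFieldType) (h : {poly F}) k :
  (forall p, h %| p ^+ (#|F| ^ k) - p) -> frob_iter_id h k.
Proof. by move=> H p; rewrite frob_iterE; apply: dvdp_modeq. Qed.

Lemma irr_fermat (F : finFieldType) (g : {poly F}) (mg : g \is monic)
  (ig : irreducible_poly g) (p : {poly F}) j :
  g %| p ^+ (#|F| ^ ((size g).-1 * j)) - p.
Proof.
pose mi : monic_irreducible_poly g := (ig, mg).
have key : forall x : {poly %/ g with mi}, forall j, x ^+ (#|{poly %/ g with mi}| ^ j) = x.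
  move=> x; elim=> [|i IH]; first by rewrite expr1.
  by rewrite expnSr exprM IH expf_card.
have e1 : in_qpoly g (p ^+ (#|F| ^ ((size g).-1 * j))) = in_qpoly g p.
  rewrite rmorphXn expnM -(card_qfpoly mi).
  exact: (key (in_qpoly g p : {poly %/ g with mi}) j).
have : in_qpoly g (p ^+ (#|F| ^ ((size g).-1 * j)) - p) = 0.
  by rewrite raddfB /= e1 subrr.
move/(congr1 (fun x : {poly %/ g} => (x : {poly F}))) => /=.
rewrite mk_monicE // => /eqP.
rewrite -(Pdiv.IdomainMonic.modpE mg) => /eqP.
by move/modp_eq0P.
Qed.
Lemma coprime_mi (F : fieldType) (g g' : {poly F}) :
  g \is monic -> irreducible_poly g -> g' \is monic -> irreducible_poly g' ->
  g != g' -> coprimep g g'.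
Proof.
move=> mg ig mg' ig' ne.
rewrite irreducible_poly_coprime //; apply/negP => d.
case: ig => s1 _; case: ig' => _ H.
have : g %= g' by apply: H => //; rewrite neq_ltn s1 orbT.
by rewrite eqp_monic // (negbTE ne).
Qed.

Lemma coprime_prod (F : fieldType) (g : {poly F}) (s : seq {poly F}) :
  (forall g', g' \in s -> coprimep g g') -> coprimep g (\prod_(x <- s) x).
Proof.
elim: s => [|a s IH] H; first by rewrite big_nil coprimep1.
rewrite big_cons coprimepMr H ?mem_head //= IH // => g' hg'.
by apply: H; rewrite inE hg' orbT.
Qed.

Lemma prod_dvd (F : fieldType) (s : seq {poly F}) (P : {poly F}) :
  uniq s -> (forall g, g \in s -> [/\ g \is monic, irreducible_poly g & g %| P]) ->
  \prod_(x <- s) x %| P.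
Proof.
elim: s => [|a s IH] /=; first by rewrite big_nil dvd1p.
case/andP => nas us H.
have [ma ia da] := H a (mem_head _ _).
rewrite big_cons Gauss_dvdp ?da ?IH //.
- by move=> g hg; apply: H; rewrite inE hg orbT.
apply: coprime_prod => g' hg'.
have hg'' : g' \in a :: s by rewrite inE hg' orbT.
have [mg ig _] := H g' hg''.
apply: coprime_mi => //; apply/eqP => e; move: nas; by rewrite e hg'.
Qed.

Lemma size_prod_seq' (F : fieldType) (s : seq {poly F}) :
  (forall g, g \in s -> g != 0) ->
  size (\prod_(x <- s) x) = (\sum_(x <- s) (size x).-1)%N.+1.
Proof.
elim: s => [|a s IH] H; first by rewrite !big_nil size_poly1.
have a0 : a != 0 by apply: H; rewrite mem_head.
have p0 : \prod_(x <- s) x != 0.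
  rewrite prodf_seq_neq0; apply/allP => x hx /=; apply: H; by rewrite inE hx orbT.
rewrite !big_cons size_mul // IH; last by move=> g hg; apply: H; rewrite inE hg orbT.
by rewrite addnS (polySpred a0).
Qed.

Lemma min_exists (Q : nat -> Prop) K : (0 < K)%N -> Q K ->
  exists k, [/\ (0 < k)%N, (k <= K)%N, Q k & forall j, (0 < j < k)%N -> ~ Q j].
Proof.
elim/ltn_ind: K => K IH K0 QK.
case: (pselect (exists j, (0 < j < K)%N /\ Q j)) => [[j [/andP [j0 jK] Qj]]|no].
  have [k [k0 kj Qk mk]] := IH j jK j0 Qj.
  by exists k; split => //; apply: leq_trans kj (ltnW jK).
exists K; split => // j hj Qj; apply: no; by exists j.
Qed.
Section RealPart.
Variable R : realType.

Lemma sum_gt (a : R) (D : seq nat) :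
  (forall d, d \in D -> a < d%:R) -> D != [::] ->
  (size D)%:R * a < (\sum_(d <- D) d)%N%:R.
Proof.
elim: D => [|x D IH] // H _.
have hx : a < x%:R by apply: H; rewrite mem_head.
rewrite big_cons natrD /= -addn1 natrD mulrDl mul1r addrC.
case: D IH H => [|y D'] IH H.
  by rewrite big_nil /= mul0r !addr0.
apply: ltrD => //.
have H' : forall d, d \in y :: D' -> a < d%:R.
  by move=> d hd; apply: H; rewrite inE hd orbT.
exact: (IH H' isT).
Qed.

Lemma sum_ln_le (a : R) (D : seq nat) : 0 < a ->
  (forall d, d \in D -> 0 < (d%:R : R)) ->
  \sum_(d <- D) ln (d%:R : R) <= (size D)%:R * (ln a - 1) + (\sum_(d <- D) d)%N%:R / a.
Proof.
move=> a0; elim: D => [|x D IH] H; first by rewrite !big_nil mul0r mul0r addr0.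
have hx : 0 < (x%:R : R) by apply: H; rewrite mem_head.
have H' : forall d, d \in D -> 0 < (d%:R : R).
  by move=> d hd; apply: H; rewrite inE hd orbT.
have IH' := IH H'.
rewrite !big_cons natrD /= -addn1 natrD mulrDl mul1r mulrDl.
have e : ln (x%:R : R) <= ln a - 1 + x%:R / a.
  have q0 : 0 < (x%:R / a : R) by rewrite divr_gt0.
  have -> : ln (x%:R : R) = ln a + ln (x%:R / a).
    by rewrite -lnM ?posrE // mulrC divfK // gt_eqF.
  have := @le_ln1Dx R (x%:R / a - 1).
  have -> : 1 + (x%:R / a - 1) = x%:R / a by lra.
  move=> l; have := l ltac:(lra). lra.
lra.
Qed.

Lemma expR_half_le2 : expR (1/2 : R) <= 2.
Proof.
have h1 := @expR_ge1Dx R (- (1/2)).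
have h2 : expR (1/2 : R) * expR (- (1/2)) = 1 by rewrite -expRD subrr expR0.
have h3 := @expR_gt0 R (1/2).
nra.
Qed.

Lemma real_bound (n : nat) (D : seq nat) :
  (4 <= n)%N -> (forall d, d \in D -> (n%:R : R) `^ (2/3) < d%:R) ->
  (\sum_(d <- D) d <= n)%N ->
  ((\prod_(d <- D) d)%N%:R : R) < expR ((2/3) * n%:R `^ (1/3) * ln (n%:R : R)).
Proof.
move=> n4 HD HS.
set N : R := n%:R.
have N4 : 4 <= N by rewrite /N (ler_nat R 4 n).
have N0 : 0 < N by lra.
set t := N `^ (1/3); set a := N `^ (2/3).
have t0 : 0 < t by rewrite powR_gt0.
have a0 : 0 < a by rewrite powR_gt0.
have ha : a = t * t.
  rewrite /a /t -powRD; first by congr (_ `^ _); lra.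
  by apply/implyP => _; rewrite gt_eqF.
have hN : N = t * a.
  rewrite /a /t -powRD; last by apply/implyP => _; rewrite gt_eqF.
  have -> : (1 / 3 + 2 / 3 : R) = 1 by lra.
  by rewrite powRr1 // ltW.
have lnN : 0 < ln N by apply: ln_gt0; lra.
have lna : ln a = 2/3 * ln N by rewrite /a ln_powR.
have hS : (\sum_(d <- D) d)%N%:R <= N by rewrite /N ler_nat.
have Dpos : forall d, d \in D -> 0 < (d%:R : R).
  by move=> d hd; apply: lt_trans (HD d hd); rewrite powR_gt0.
case: (leqP (size D) 1) => hm.
  have hp : ((\prod_(d <- D) d)%N <= n)%N.
    case: D HD HS hS hm Dpos => [|x [|y D]] //= _ HS _ _ _.
      by rewrite big_nil (leq_trans _ n4).
    by move: HS; rewrite !big_cons !big_nil addn0 muln1.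
  apply: (le_lt_trans (y := N)); first by rewrite /N ler_nat.
  rewrite -{1}(lnK (x := N)) ?posrE // ltr_expR.
  have t32 : 3/2 < t.
    rewrite ltNge; apply/negP => tle.
    have : N <= 27/8 by rewrite hN ha; nra.
    lra.
  nra.
have D0 : D != [::] by apply/eqP => e; move: hm; rewrite e.
have hmt : (size D)%:R < t.
  have h := @sum_gt a D HD D0.
  have : (size D)%:R * a < t * a by apply: lt_le_trans h _; rewrite -hN.
  by rewrite ltr_pM2r.
have m2 : 2 <= (size D)%:R :> R by rewrite (ler_nat R 2).
have N8 : 8 < N by rewrite hN ha; nra.
have L32 : 3/2 < ln N.
  rewrite -ltr_expR lnK ?posrE //.
  have -> : (3/2 : R) = 1/2 + 1/2 + 1/2 by lra.
  rewrite !expRD.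
  have e := expR_half_le2; have e0 := @expR_gt0 R (1/2).
  have : expR (1/2 : R) * expR (1/2) * expR (1/2) <= 8 by nra.
  lra.
rewrite natr_prod.
have -> : \prod_(d <- D) (d%:R : R) = \prod_(d <- D) expR (ln (d%:R : R)).
  rewrite big_seq_cond [in RHS]big_seq_cond; apply: eq_bigr => d /andP [hd _].
  by rewrite lnK // posrE Dpos.
rewrite -expR_sum ltr_expR.
have h := @sum_ln_le a D a0 Dpos.
have hSa : (\sum_(d <- D) d)%N%:R / a <= t.
  by rewrite ler_pdivrMr // -hN.
rewrite lna in h.
set m : R := (size D)%:R in hmt m2 h.
set L := ln N in lnN lna L32 h *.
apply: (le_lt_trans h).
have : 0 < (t - m) * (2/3 * L - 1) by apply: mulr_gt0; lra.
nra.
Qed.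

End RealPart.

Theorem lemma1 (R : realType) (F : finFieldType) (f : {poly F}) (n : nat)
  (hf : squarefree_poly f) (hn : (size f).-1 = n) (hn4 : (4 <= n)%N) :
  exists k : nat, is_frob_order (ftilde R f) k /\
    k%:R < expR ((2/3) * n%:R `^ (1/3) * ln (n%:R : R)).
Proof.
have f0 : f != 0 by case: hf.
set G := fun c : (size f).-tuple F => \poly_(i < size f) c`_i.
set P := fun c : (size f).-tuple F =>
  [&& G c \is monic, `[< irreducible_poly (G c) >], G c %| f &
      (((size f).-1)%:R `^ (2/3) < ((size (G c)).-1)%:R :> R)].
set r := [seq c <- index_enum ((size f).-tuple F) | P c].
set s := map G r.
have hE : ftilde R f = \prod_(g <- s) g.
  by rewrite /s big_map /r big_filter.
have Ginj : injective G.
  move=> c c' e; apply: eq_from_tnth => i.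
  have := congr1 (fun p : {poly F} => p`_i) e; rewrite /G !coef_poly ltn_ord.
  by rewrite !(tnth_nth 0).
have us : uniq s.
  rewrite map_inj_uniq // filter_uniq //; exact: index_enum_uniq.
have sP : forall g, g \in s -> [/\ g \is monic, irreducible_poly g, g %| f &
      (n%:R `^ (2/3) < ((size g).-1)%:R :> R)].
  move=> g /mapP [c]; rewrite mem_filter => /andP [Pc _] ->.
  case/and4P: Pc => m /asboolP i d l; split => //; by rewrite -hn.
have hdvd : ftilde R f %| f.
  rewrite hE; apply: prod_dvd => // g /sP [? ? ? _]; by split.
set D := map (fun g : {poly F} => (size g).-1) s.
have HS : (\sum_(d <- D) d <= n)%N.
  have := dvdp_leq f0 hdvd; rewrite hE size_prod_seq'; last first.
    by move=> g /sP [_ [i _] _ _]; rewrite -size_poly_gt0 ltnW.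
  by rewrite /D big_map -hn => h; rewrite -ltnS prednK ?size_poly_gt0.
have HD : forall d, d \in D -> (n%:R : R) `^ (2/3) < d%:R.
  by move=> d /mapP [g /sP [_ _ _ l] ->].
set K := (\prod_(d <- D) d)%N.
have K0 : (0 < K)%N.
  rewrite /K big_seq; apply: (big_ind (fun k => 0 < k)%N) => //.
    by move=> x y; rewrite muln_gt0 => -> ->.
  move=> d /mapP [g /sP [_ [i _] _ _] ->].
  by rewrite -ltnS prednK // (ltn_trans _ i).
have QK : frob_iter_id (ftilde R f) K.
  apply: frob_id_of_dvd => p; rewrite [X in X %| _]hE.
  apply: prod_dvd => // g hg; have [mg ig _ _] := sP g hg; split => //.
  have hd : (size g).-1 \in D by apply: map_f.
  rewrite /K (big_rem _ hd) /=.
  exact: irr_fermat.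
have [k [k0 kK Qk mk]] := @min_exists (frob_iter_id (ftilde R f)) K K0 QK.
exists k; split; first by split.
apply: (le_lt_trans (y := K%:R)); first by rewrite ler_nat.
exact: real_bound.
Qed.
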